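(* Let $\Omega$ be a Polish space, $m$ a finite positive Borel measure on $\Omega$ and $f$ an entropy function. Then the internal energy $H_{f,m}\colon\mathcal M(\Omega)\to\mathbb R\cup\{+\infty\}$ is totally substitutable.
   Context: An entropy function is a proper, convex, lower semicontinuous $f\colon[0,\infty)\to[0,\infty]$ with $f(s)/s\to+\infty$ as $s\to\infty$. $\mathcal M(\Omega)$ is the Banach lattice of finite signed Borel measures (setwise order, total variation norm). $H_{f,m}(\mu)=\int_\Omega f(d\mu/dm)\,dm$ if $\mu$ is positive and absolutely continuous w.r.t. $m$, and $+\infty$ otherwise (if $m=0$, $H_{f,0}(\mu)=0$ for $\mu=0$ and $+\infty$ otherwise). On a Banach lattice $Y$, $[a,b]=\{y:a\leq y\leq b\}$; $H\colon Y\to\mathbb R\cup\{+\infty\}$ is totally substitutable if for all $\mu_1,\mu_2\in Y$ and all $\mu_1',\mu_2'\in[\mu_1\wedge\mu_2,\mu_1\vee\mu_2]$ with $\mu_1'+\mu_2'=\mu_1+\mu_2$ one has $H(\mu_1')+H(\mu_2')\leq H(\mu_1)+H(\mu_2)$. *)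

(* Defs.v *)
From HB Require Import structures.
From mathcomp Require Import all_boot all_order all_algebra.
From mathcomp Require Import all_classical all_reals all_analysis.
Set Implicit Arguments. Unset Strict Implicit. Unset Printing Implicit Defensive.
Import Order.TTheory GRing.Theory Num.Theory.
Import numFieldNormedType.Exports.
Local Open Scope classical_set_scope.
Local Open Scope ring_scope.

Notation Borel T := (g_sigma_algebraType (@open T)).

(** A Polish space, presented by a compatible complete metric:
    T is a complete metric space (Hausdorff) that is separable. *)
Definition polish_space (R : realType) (T : completePseudoMetricType R) : Prop :=
  hausdorff_space T /\ exists D : set T, countable D /\ dense D.

Local Open Scope ereal_scope.

(** Entropy function f : [0,oo) -> [0,+oo], represented on all of R with the
    standard convention f = +oo on (-oo,0) (so convexity/lsc on R are
    exactly convexity/lsc on [0,oo)). *)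
Definition entropy_function (R : realType) (f : R -> \bar R) : Prop :=
  (forall s : R, (s < 0)%R -> f s = +oo) /\
  [/\ (forall s : R, (0 <= s)%R -> 0 <= f s),
      (exists s : R, f s < +oo),
      (forall (s t l : R), (0 <= l <= 1)%R ->
         f (l * s + (1 - l) * t)%R <= l%:E * f s + (1 - l)%:E * f t),
      lower_semicontinuous f &
      (f s * (s^-1)%:E) @[s --> +oo%R] --> +oo].

Definition cle d (T : measurableType d) (R : realType)
  (mu nu : set T -> \bar R) : Prop :=
  forall A, measurable A -> mu A <= nu A.

Definition cmeet d (T : measurableType d) (R : realType)
  (mu nu : {charge set T -> \bar R}) : set T -> \bar R :=
  fun A => ereal_inf [set mu (A `&` B) + nu (A `\` B) | B in measurable].

Definition cjoin d (T : measurableType d) (R : realType)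
  (mu nu : {charge set T -> \bar R}) : set T -> \bar R :=
  fun A => ereal_sup [set mu (A `&` B) + nu (A `\` B) | B in measurable].

Definition internal_energy d (T : measurableType d) (R : realType)
  (f : R -> \bar R) (m : {finite_measure set T -> \bar R})
  (mu : {charge set T -> \bar R}) : \bar R :=
  if `[< (forall A, measurable A -> 0 <= mu A) /\ (mu `<< m) >]
  then \int[m]_x f (fine (Radon_Nikodym mu m x))
  else +oo.

Definition totally_substitutable d (T : measurableType d) (R : realType)
  (H : {charge set T -> \bar R} -> \bar R) : Prop :=
  forall mu1 mu2 mu1' mu2' : {charge set T -> \bar R},
    cle (cmeet mu1 mu2) mu1' -> cle mu1' (cjoin mu1 mu2) ->
    cle (cmeet mu1 mu2) mu2' -> cle mu2' (cjoin mu1 mu2) ->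
    (forall A, measurable A -> mu1' A + mu2' A = mu1 A + mu2 A) ->
    H mu1' + H mu2' <= H mu1 + H mu2.

(* Main.v *)
Require Import Defs.
From HB Require Import structures.
From mathcomp Require Import all_boot all_order all_algebra.
From mathcomp Require Import all_classical all_reals all_analysis.
Import Order.TTheory GRing.Theory Num.Theory.
Import numFieldNormedType.Exports.
Local Open Scope classical_set_scope.
Local Open Scope ring_scope.
From mathcomp Require Import ring lra.
From mathcomp Require Import measurable_realfun.

Section conv.
Local Open Scope ereal_scope.
Context (R : realType) (f : R -> \bar R) (hf : entropy_function f).

Lemma ef_ge0 s : 0 <= f s.
Proof.
case: hf => hneg [hpos _ _ _ _].
have [s0|s0] := leP 0%R s; first exact: hpos.
by rewrite hneg.
Qed.

Lemma conv_pair_le (a1 a2 b1 b2 : R) : (a1 <= b1 <= a2)%R -> (b1 + b2 = a1 + a2)%R ->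
  f b1 + f b2 <= f a1 + f a2.
Proof.
case: hf => _ [_ _ hc _ _] /andP[h1 h2] hs.
have [e|ne] := eqVneq a1 a2.
  have eb1 : b1 = a1 by apply/eqP; rewrite eq_le h1 andbT; rewrite e.
  have eb2 : b2 = a1 by rewrite -e in hs; lra.
  by rewrite eb1 eb2 e.
have lt12 : (a1 < a2)%R by rewrite lt_neqAle ne (le_trans h1 h2).
pose l := ((a2 - b1) / (a2 - a1))%R.
have d0 : (a2 - a1 != 0)%R by rewrite subr_eq0 eq_sym.
have l0 : (0 <= l)%R by rewrite /l divr_ge0 // subr_ge0 // ltW.
have l1 : (l <= 1)%R by rewrite /l ler_pdivrMr ?subr_gt0 // mul1r; lra.
have eb1 : b1 = (l * a1 + (1 - l) * a2)%R.
  rewrite /l; field; done.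
have eb2 : b2 = ((1 - l) * a1 + (1 - (1 - l)) * a2)%R.
  have -> : b2 = (a1 + a2 - b1)%R by lra.
  rewrite /l; field; done.
have c1 := hc a1 a2 l; have c2 := hc a1 a2 (1 - l)%R.
rewrite -eb1 in c1; rewrite -eb2 in c2.
have /c1 {}c1 : (0 <= l <= 1)%R by rewrite l0 l1.
have /c2 {}c2 : (0 <= 1 - l <= 1)%R by apply/andP; split; lra.
apply: le_trans (leeD c1 c2) _.
have -> : (1 - (1 - l) = l)%R by lra.
rewrite addeACA.
have hl0 : 0 <= l%:E by rewrite lee_fin.
have hl1 : 0 <= (1 - l)%:E by rewrite lee_fin subr_ge0.
rewrite -(ge0_muleDl (f a1) hl0 hl1).
rewrite -(ge0_muleDl (f a2) hl1 hl0).
rewrite -!EFinD. have -> : (l + (1 - l) = 1)%R by lra. have -> : (1 - l + l = 1)%R by lra. by rewrite !mul1e.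
Qed.
End conv.

Section meas.
Local Open Scope ereal_scope.
Context d (T : measurableType d) (R : realType) (m : {finite_measure set T -> \bar R}).

Lemma null_of_lt (g h : T -> \bar R) (A : set T) : measurable A ->
  m.-integrable setT g -> m.-integrable setT h ->
  (forall x, g x \is a fin_num) ->
  (forall x, A x -> g x < h x) ->
  \int[m]_(x in A) h x <= \int[m]_(x in A) g x -> m A = 0.
Proof.
move=> mA ig ih gf gh hle.
have igA : m.-integrable A g := integrableS measurableT mA (@subsetT _ _) ig.
have ihA : m.-integrable A h := integrableS measurableT mA (@subsetT _ _) ih.
have mhg := @emeasurable_funB _ _ _ A h g (measurable_int m ihA) (measurable_int m igA).
have I0 : \int[m]_(x in A) `|(h \- g)%E x| = 0.
  rewrite (eq_integral (h \- g)%E); last first.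
    by move=> x /set_mem Ax /=; rewrite gee0_abs // sube_ge0 ?gf ?ltW ?gh.
  apply/eqP; rewrite eq_le; apply/andP; split.
    by rewrite integralB // sube_le0.
  apply: integral_ge0 => x Ax /=; by rewrite sube_ge0 ?gf ?ltW ?gh.
have [N [mN N0 sN]] := (ae_eq_integral_abs m mA mhg).1 I0.
apply: (subset_measure0 mA mN _ N0) => x Ax; apply: sN => /= /(_ Ax) hg.
by have := gh x Ax; rewrite -sube_gt0 ?gf // hg ltxx.
Qed.

Local Notation rho nu := (Radon_Nikodym nu m).

Lemma rho_int (nu : {charge set T -> \bar R}) : nu `<< m -> m.-integrable setT (rho nu).
Proof. exact: Radon_Nikodym_integrable. Qed.

Lemma rho_intS (nu : {charge set T -> \bar R}) A : measurable A -> nu `<< m -> m.-integrable A (rho nu).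
Proof. by move=> mA h; exact: (integrableS measurableT mA (@subsetT _ _) (@rho_int nu h)). Qed.

Lemma join_le1 (mu1 mu2 : {charge set T -> \bar R}) S : mu1 `<< m -> mu2 `<< m ->
  measurable S -> (forall x, S x -> rho mu2 x <= rho mu1 x) ->
  cjoin mu1 mu2 S <= mu1 S.
Proof.
move=> h1 h2 mS hS; apply: ge_ereal_sup => _ [B mB <-].
have mSB : measurable (S `\` B) by exact: measurableD.
rewrite [leRHS](chargeDI mu1 mS mB) [leRHS]addeC; apply: leeD; first exact: le_refl.
rewrite (@Radon_Nikodym_integral _ _ _ mu1 m _ h1 mSB) (@Radon_Nikodym_integral _ _ _ mu2 m _ h2 mSB).
apply: le_integral => //; try exact: rho_intS.
by move=> x /set_mem [Sx _]; exact: hS.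
Qed.

Lemma join_le2 (mu1 mu2 : {charge set T -> \bar R}) S : mu1 `<< m -> mu2 `<< m ->
  measurable S -> (forall x, S x -> rho mu1 x <= rho mu2 x) ->
  cjoin mu1 mu2 S <= mu2 S.
Proof.
move=> h1 h2 mS hS; apply: ge_ereal_sup => _ [B mB <-].
have mSB : measurable (S `&` B) by exact: measurableI.
rewrite [leRHS](chargeDI mu2 mS mB) [leRHS]addeC; apply: leeD; last exact: le_refl.
rewrite (@Radon_Nikodym_integral _ _ _ mu1 m _ h1 mSB) (@Radon_Nikodym_integral _ _ _ mu2 m _ h2 mSB).
apply: le_integral => //; try exact: rho_intS.
by move=> x /set_mem [Sx _]; exact: hS.
Qed.

Lemma meet_ge1 (mu1 mu2 : {charge set T -> \bar R}) S : mu1 `<< m -> mu2 `<< m ->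
  measurable S -> (forall x, S x -> rho mu1 x <= rho mu2 x) ->
  mu1 S <= cmeet mu1 mu2 S.
Proof.
move=> h1 h2 mS hS; apply/ereal_infP => _ [B mB <-].
have mSB : measurable (S `\` B) by exact: measurableD.
rewrite [leLHS](chargeDI mu1 mS mB) [leLHS]addeC; apply: leeD; first exact: le_refl.
rewrite (@Radon_Nikodym_integral _ _ _ mu1 m _ h1 mSB) (@Radon_Nikodym_integral _ _ _ mu2 m _ h2 mSB).
apply: le_integral => //; try exact: rho_intS.
by move=> x /set_mem [Sx _]; exact: hS.
Qed.

Lemma meet_ge2 (mu1 mu2 : {charge set T -> \bar R}) S : mu1 `<< m -> mu2 `<< m ->
  measurable S -> (forall x, S x -> rho mu2 x <= rho mu1 x) ->
  mu2 S <= cmeet mu1 mu2 S.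
Proof.
move=> h1 h2 mS hS; apply/ereal_infP => _ [B mB <-].
have mSB : measurable (S `&` B) by exact: measurableI.
rewrite [leLHS](chargeDI mu2 mS mB) [leLHS]addeC; apply: leeD; last exact: le_refl.
rewrite (@Radon_Nikodym_integral _ _ _ mu1 m _ h1 mSB) (@Radon_Nikodym_integral _ _ _ mu2 m _ h2 mSB).
apply: le_integral => //; try exact: rho_intS.
by move=> x /set_mem [Sx _]; exact: hS.
Qed.

End meas.

Section meas2.
Local Open Scope ereal_scope.
Context d (T : measurableType d) (R : realType) (m : {finite_measure set T -> \bar R}).
Local Notation rho nu := (Radon_Nikodym nu m).

Lemma bounds_ae (mu1 mu2 nu : {charge set T -> \bar R}) :
  mu1 `<< m -> mu2 `<< m -> nu `<< m ->
  cle (cmeet mu1 mu2) nu -> cle nu (cjoin mu1 mu2) ->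
  exists N, [/\ measurable N, m N = 0 &
   forall x, ~ N x ->
    (rho mu1 x <= rho mu2 x -> rho mu1 x <= rho nu x <= rho mu2 x) /\
    (rho mu2 x <= rho mu1 x -> rho mu2 x <= rho nu x <= rho mu1 x)].
Proof.
move=> h1 h2 hn lo hi.
have i1 := @rho_int _ _ _ m mu1 h1; have i2 := @rho_int _ _ _ m mu2 h2.
have iN := @rho_int _ _ _ m nu hn.
have m1 := measurable_int m i1; have m2 := measurable_int m i2.
have mN := measurable_int m iN.
have f1 : forall x, rho mu1 x \is a fin_num := fun x => Radon_Nikodym_fin_num x h1.
have f2 : forall x, rho mu2 x \is a fin_num := fun x => Radon_Nikodym_fin_num x h2.
have fN : forall x, rho nu x \is a fin_num := fun x => Radon_Nikodym_fin_num x hn.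
pose S1 := (setT `&` [set x | rho mu2 x <= rho mu1 x]) `&` (setT `&` [set x | rho mu1 x < rho nu x]).
have mS1 : measurable S1 by apply: measurableI; [exact: measurable_lee|exact: measurable_lte].
have S10 : m S1 = 0.
  apply: (@null_of_lt _ _ _ m _ _ _ mS1 i1 iN f1); first by move=> x [_ [_ ?]].
  rewrite -(@Radon_Nikodym_integral _ _ _ nu m _ hn mS1) -(@Radon_Nikodym_integral _ _ _ mu1 m _ h1 mS1).
  apply: le_trans (hi _ mS1) _; apply: (@join_le1 _ _ _ m mu1 mu2 S1 h1 h2 mS1) => x [[_ ?] _] //.
pose S2 := (setT `&` [set x | rho mu1 x <= rho mu2 x]) `&` (setT `&` [set x | rho mu2 x < rho nu x]).
have mS2 : measurable S2 by apply: measurableI; [exact: measurable_lee|exact: measurable_lte].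
have S20 : m S2 = 0.
  apply: (@null_of_lt _ _ _ m _ _ _ mS2 i2 iN f2); first by move=> x [_ [_ ?]].
  rewrite -(@Radon_Nikodym_integral _ _ _ nu m _ hn mS2) -(@Radon_Nikodym_integral _ _ _ mu2 m _ h2 mS2).
  apply: le_trans (hi _ mS2) _; apply: (@join_le2 _ _ _ m mu1 mu2 S2 h1 h2 mS2) => x [[_ ?] _] //.
pose T1 := (setT `&` [set x | rho mu1 x <= rho mu2 x]) `&` (setT `&` [set x | rho nu x < rho mu1 x]).
have mT1 : measurable T1 by apply: measurableI; [exact: measurable_lee|exact: measurable_lte].
have T10 : m T1 = 0.
  apply: (@null_of_lt _ _ _ m _ _ _ mT1 iN i1 fN); first by move=> x [_ [_ ?]].
  rewrite -(@Radon_Nikodym_integral _ _ _ nu m _ hn mT1) -(@Radon_Nikodym_integral _ _ _ mu1 m _ h1 mT1).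
  apply: le_trans _ (lo _ mT1); apply: (@meet_ge1 _ _ _ m mu1 mu2 T1 h1 h2 mT1) => x [[_ ?] _] //.
pose T2 := (setT `&` [set x | rho mu2 x <= rho mu1 x]) `&` (setT `&` [set x | rho nu x < rho mu2 x]).
have mT2 : measurable T2 by apply: measurableI; [exact: measurable_lee|exact: measurable_lte].
have T20 : m T2 = 0.
  apply: (@null_of_lt _ _ _ m _ _ _ mT2 iN i2 fN); first by move=> x [_ [_ ?]].
  rewrite -(@Radon_Nikodym_integral _ _ _ nu m _ hn mT2) -(@Radon_Nikodym_integral _ _ _ mu2 m _ h2 mT2).
  apply: le_trans _ (lo _ mT2); apply: (@meet_ge2 _ _ _ m mu1 mu2 T2 h1 h2 mT2) => x [[_ ?] _] //.
exists (S1 `|` S2 `|` T1 `|` T2); split.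
- by do !apply: measurableU.
- by rewrite !measureU0 //; do ?apply: measurableU.
- move=> x Nx; split => hle; apply/andP; split; rewrite leNgt; apply/negP => hlt; apply: Nx.
  + by left; right; split; split.
  + by left; left; right; split; split.
  + by right; split; split.
  + by left; left; left; split; split.
Qed.

Lemma sum_ae (mu1 mu2 mu1' mu2' : {charge set T -> \bar R}) :
  mu1 `<< m -> mu2 `<< m -> mu1' `<< m -> mu2' `<< m ->
  (forall A, measurable A -> mu1' A + mu2' A = mu1 A + mu2 A) ->
  exists N, [/\ measurable N, m N = 0 &
   forall x, ~ N x -> rho mu1' x + rho mu2' x = rho mu1 x + rho mu2 x].
Proof.
move=> h1 h2 h1' h2' hs.
have i1 := @rho_int _ _ _ m mu1 h1; have i2 := @rho_int _ _ _ m mu2 h2.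
have i1' := @rho_int _ _ _ m mu1' h1'; have i2' := @rho_int _ _ _ m mu2' h2'.
have m1 := measurable_int m i1; have m2 := measurable_int m i2.
have m1' := measurable_int m i1'; have m2' := measurable_int m i2'.
have f12 : forall x, (rho mu1 \+ rho mu2) x \is a fin_num.
  by move=> x; rewrite fin_numD !Radon_Nikodym_fin_num.
have f12' : forall x, (rho mu1' \+ rho mu2') x \is a fin_num.
  by move=> x; rewrite fin_numD !Radon_Nikodym_fin_num.
have iS := integrableD measurableT i1 i2.
have iS' := integrableD measurableT i1' i2'.
have IE A : measurable A -> \int[m]_(x in A) (rho mu1' \+ rho mu2') x = \int[m]_(x in A) (rho mu1 \+ rho mu2) x.
  move=> mA; rewrite /= integralD //; try exact: rho_intS.
  rewrite integralD //; try exact: rho_intS.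
  rewrite -(@Radon_Nikodym_integral _ _ _ mu1 m _ h1 mA) -(@Radon_Nikodym_integral _ _ _ mu2 m _ h2 mA).
  rewrite -(@Radon_Nikodym_integral _ _ _ mu1' m _ h1' mA) -(@Radon_Nikodym_integral _ _ _ mu2' m _ h2' mA).
  exact: hs.
pose E1 := setT `&` [set x | (rho mu1 \+ rho mu2) x < (rho mu1' \+ rho mu2') x].
pose E2 := setT `&` [set x | (rho mu1' \+ rho mu2') x < (rho mu1 \+ rho mu2) x].
have mE1 : measurable E1 by apply: measurable_lte => //; exact: emeasurable_funD.
have mE2 : measurable E2 by apply: measurable_lte => //; exact: emeasurable_funD.
have E10 : m E1 = 0.
  apply: (@null_of_lt _ _ _ m _ _ _ mE1 iS iS' f12); first by move=> x [_ ?].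
  by rewrite IE.
have E20 : m E2 = 0.
  apply: (@null_of_lt _ _ _ m _ _ _ mE2 iS' iS f12'); first by move=> x [_ ?].
  by rewrite IE.
exists (E1 `|` E2); split.
- exact: measurableU.
- by rewrite measureU0.
- move=> x Nx; apply/eqP; rewrite eq_le; apply/andP; split; rewrite leNgt; apply/negP => hlt; apply: Nx.
  + by left; split.
  + by right; split.
Qed.

End meas2.

Section meas3.
Local Open Scope ereal_scope.
Context d (T : measurableType d) (R : realType) (m : {finite_measure set T -> \bar R}).
Local Notation rho nu := (Radon_Nikodym nu m).

Lemma IE_ge0 f (hf : entropy_function f) nu : 0 <= internal_energy f m nu.
Proof.
rewrite /internal_energy; case: ifP => _; last exact: le0y.
by apply: integral_ge0 => x _; exact: ef_ge0.
Qed.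

Theorem ts_gen f (hf : entropy_function f) : totally_substitutable (internal_energy f m).
Proof.
move=> mu1 mu2 mu1' mu2' lo1 hi1 lo2 hi2 hs.
have yD x : 0 <= x -> +oo + x = +oo.
  by move=> x0; rewrite addye // gt_eqF // (lt_le_trans ltNy0 x0).
have Dy x : 0 <= x -> x + +oo = +oo.
  by move=> x0; rewrite addey // gt_eqF // (lt_le_trans ltNy0 x0).
have [[p1 d1]|n1] := asboolP ((forall A, measurable A -> 0 <= mu1 A) /\ mu1 `<< m); last first.
  by rewrite [internal_energy f m mu1]/internal_energy (asboolF n1) yD ?leey // IE_ge0.
have [[p2 d2]|n2] := asboolP ((forall A, measurable A -> 0 <= mu2 A) /\ mu2 `<< m); last first.
  by rewrite [internal_energy f m mu2]/internal_energy (asboolF n2) Dy ?leey // IE_ge0.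
have meet0 A : measurable A -> 0 <= cmeet mu1 mu2 A.
  move=> mA; apply/ereal_infP => _ [B mB <-]; apply: adde_ge0.
    by apply: p1; exact: measurableI.
  by apply: p2; exact: measurableD.
have good (nu : {charge set T -> \bar R}) : cle (cmeet mu1 mu2) nu -> cle nu (cjoin mu1 mu2) ->
    (forall A, measurable A -> 0 <= nu A) /\ nu `<< m.
  move=> lo hi; split.
    by move=> A mA; exact: le_trans (meet0 _ mA) (lo _ mA).
  apply/null_content_dominatesP => A mA mA0; apply/eqP.
  rewrite eq_le (le_trans (meet0 _ mA) (lo _ mA)) andbT.
  apply: le_trans (hi _ mA) _; apply: ge_ereal_sup => _ [B mB <-].
  have mAB := measurableI _ _ mA mB.
  have mADB := measurableD mA mB.
  have mAB0 : m (A `&` B) = 0 := subset_measure0 mAB mA (@subIsetl _ _ _) mA0.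
  have mADB0 : m (A `\` B) = 0 := subset_measure0 mADB mA (@subDsetl _ _ _) mA0.
  rewrite ((null_content_dominatesP mu1 m).1 d1 _ mAB mAB0).
  by rewrite ((null_content_dominatesP mu2 m).1 d2 _ mADB mADB0) adde0.
have [p1' d1'] := good _ lo1 hi1.
have [p2' d2'] := good _ lo2 hi2.
rewrite /internal_energy !asboolT //.
have lsc : lower_semicontinuous f by case: hf => _ [].
have mF (nu : {charge set T -> \bar R}) : nu `<< m ->
    measurable_fun setT (fun x => f (fine (rho nu x))).
  move=> hn; apply: measurableT_comp => //.
    exact: measurable_realfun.lower_semicontinuous_measurable.
  apply: measurableT_comp => //; exact: measurable_int (rho_int hn).
rewrite -!ge0_integralD //; try (by move=> x _; exact: ef_ge0); try exact: mF.
apply: ae_ge0_le_integral => //.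
- by move=> x _; apply: adde_ge0; exact: ef_ge0.
- by apply: emeasurable_funD; exact: mF.
- by move=> x _; apply: adde_ge0; exact: ef_ge0.
- by apply: emeasurable_funD; exact: mF.
have [N1 [mN1 N10 hN1]] := @bounds_ae _ _ _ m mu1 mu2 mu1' d1 d2 d1' lo1 hi1.
have [N2 [mN2 N20 hN2]] := @sum_ae _ _ _ m mu1 mu2 mu1' mu2' d1 d2 d1' d2' hs.
exists (N1 `|` N2); split; first exact: measurableU.
  by rewrite measureU0.
move=> x /= hx; apply: contrapT => hN; apply: hx => _.
have nN1 : ~ N1 x by move=> ?; apply: hN; left.
have nN2 : ~ N2 x by move=> ?; apply: hN; right.
have [B1 B2] := hN1 x nN1.
have Sx := hN2 x nN2.
have e1 := fineK (Radon_Nikodym_fin_num x d1).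
have e2 := fineK (Radon_Nikodym_fin_num x d2).
have e1' := fineK (Radon_Nikodym_fin_num x d1').
have e2' := fineK (Radon_Nikodym_fin_num x d2').
move: B1 B2 Sx; rewrite -e1 -e2 -e1' -e2' !lee_fin -!EFinD => B1 B2 Sx.
have S := EFin_inj Sx.
rewrite /=.
have [h12|h21] := leP (fine (rho mu1 x)) (fine (rho mu2 x)).
  exact: (@conv_pair_le _ f hf _ _ _ _ (B1 h12) S).
rewrite [leRHS]addeC; apply: (@conv_pair_le _ f hf _ _ _ _ (B2 (ltW h21))).
by rewrite S addrC.
Qed.

End meas3.


Theorem lemma2p48 (R : realType) (T : completePseudoMetricType R)
  (hT : polish_space T)
  (m : {finite_measure set Borel T -> \bar R}) (f : R -> \bar R)
  (hf : entropy_function f) :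
  totally_substitutable (internal_energy f m).
Proof.
exact: (@ts_gen _ _ R m f hf).
Qed.
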